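(* Let $\ell$ be odd, $H=\mathbb{Z}_\ell$, let $X$ be a finite $s$-regular graph with a right action of $H$ that is free on vertices and on edges and such that no edge joins two vertices of the form $v$ and $vh$ ($h\in H$), let $L$ be a local code of block length $s$, and let $\Lambda$ be an $H$-invariant labeling. Let $C_\ell$ be the cycle graph with $\ell$ vertices and $\ell$ edges, with $H$ acting from the left by rotation. Then $$\dim H^h_1\big(C(X,L,\Lambda)\otimes_{H}C(C_\ell)\big)=\dim\ker\big(\partial: C_1(X/H)\to C_0(X/H)\otimes L_0\big),$$ i.e. the number of horizontal logical qubits of the balanced product code equals the number of bits encoded by the Tanner code $C(X/H,L,\bar\Lambda)$ on the quotient graph.
   Context: A local code is a two-term complex $L=(L_1\xrightarrow{\partial^L}L_0)$ of $\mathbb{F}_2$-vector spaces where $L_1=\mathbb{F}_2^s$ has a distinguished basis $\mathcal{B}$. For a vertex $v$ let $\delta v$ be the set of incident edges; a labeling is a family of bijections $\Lambda_v:\delta v\to\mathcal{B}$, and it is $H$-invariant if $\Lambda_{vh}(eh)=\Lambda_v(e)$ for all $v,e,h$. The Tanner code $C(X,L,\Lambda)$ is the two-term complex $C_1(X)=\mathbb{F}_2^{X^1}\xrightarrow{\partial}C_0(X)\otimes L_0$, $\partial e=v\otimes\partial^L\Lambda_v(e)+w\otimes\partial^L\Lambda_w(e)$ for an edge $e$ with endpoints $v,w$; $H$ acts on it from the right via its action on $X$ (trivially on $L_0$), by chain maps. The quotient graph $X/H$ has the $H$-orbits of vertices and edges as vertices and edges; it is $s$-regular and $\Lambda$ descends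 to a labeling $\bar\Lambda$ of $X/H$. $C(C_\ell)$ is the cellular chain complex $C_1(C_\ell)\to C_0(C_\ell)$ of the cycle graph over $\mathbb{F}_2$ (each edge maps to the sum of its two endpoints). For $V$ with right and $W$ with left $H$-action, $V\otimes_HW=(V\otimes W)/\langle vh\otimes w-v\otimes hw\rangle$. The balanced product complex $T=C(X,L,\Lambda)\otimes_HC(C_\ell)$ is the total complex with $T_2=C_1(X)\otimes_HC_1(C_\ell)$, $T_1=(C_1(X)\otimes_HC_0(C_\ell))\oplus((C_0(X)\otimes L_0)\otimes_HC_1(C_\ell))$, $T_0=(C_0(X)\otimes L_0)\otimes_HC_0(C_\ell)$ and differential induced by $\partial\otimes\operatorname{id}+\operatorname{id}\otimes\partial^{C_\ell}$. The horizontal homology $H^h_1(T)\subseteq H_1(T)$ is the subspace of classes admitting a representative of the form $(u,0)$ with $u\in C_1(X)\otimes_HC_0(C_\ell)$. *)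

(* Defs.v *)
From HB Require Import structures.
From mathcomp Require Import all_boot all_algebra.
Set Implicit Arguments. Unset Strict Implicit. Unset Printing Implicit Defensive.
Import GRing.Theory.

Definition F2 : finFieldType := 'F_2.

Local Open Scope ring_scope.

(* Graphs.  A finite (multi)graph is given by a finType V of vertices, a     *)
(* finType E of edges and a map [ends : E -> V * V] giving the two endpoints *)
(* of every edge (in an arbitrary order; the graph is undirected).          *)

Definition incident (V E : finType) (ends : E -> V * V) (v : V) : {set E} :=
  [set e | ((ends e).1 == v) || ((ends e).2 == v)].

Definition s_regular (V E : finType) (ends : E -> V * V) (s : nat) : Prop :=
  forall v : V, #|incident ends v| = s.

(* A labeling: for every v, lab v restricted to delta v is a bijection onto
   the distinguished basis 'I_s of L_1 = F_2^s. *)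
Definition is_labeling (V E : finType) (ends : E -> V * V) (s : nat)
    (lab : V -> E -> 'I_s) : Prop :=
  forall v : V,
    {in incident ends v &, injective (lab v)} /\
    (forall b : 'I_s, exists2 e, e \in incident ends v & lab v e = b).

(* Group H = Z_l with l = n.+1, realised as the cyclic group 'I_n.+1 with    *)
(* addition mod n.+1.  Right actions are maps act : T -> H -> T.             *)
Definition is_right_action (n : nat) (T : Type) (act : T -> 'I_n.+1 -> T) :=
  (forall x, act x 0 = x) /\ (forall x g h, act (act x g) h = act x (g + h)).

Definition free_action (n : nat) (T : Type) (act : T -> 'I_n.+1 -> T) :=
  forall x h, act x h = x -> h = 0.

Definition graph_action (n : nat) (V E : finType) (ends : E -> V * V)
    (actV : V -> 'I_n.+1 -> V) (actE : E -> 'I_n.+1 -> E) : Prop :=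
  forall e h,
    ends (actE e h) = (actV (ends e).1 h, actV (ends e).2 h) \/
    ends (actE e h) = (actV (ends e).2 h, actV (ends e).1 h).

Definition no_orbit_edge (n : nat) (V E : finType) (ends : E -> V * V)
    (actV : V -> 'I_n.+1 -> V) : Prop :=
  forall e h, (ends e).2 <> actV (ends e).1 h.

Definition H_invariant_labeling (n : nat) (V E : finType) (ends : E -> V * V)
    (actV : V -> 'I_n.+1 -> V) (actE : E -> 'I_n.+1 -> E) (s : nat)
    (lab : V -> E -> 'I_s) : Prop :=
  forall v e h, e \in incident ends v -> lab (actV v h) (actE e h) = lab v e.

(* Tanner code.  The local code L = (L_1 -> L_0) has L_1 = F_2^s with basis  *)
(* 'I_s, L_0 = 'rV[F2]_m, and boundary given by the s x m matrix D:          *)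
(* del^L (b) = row b D.  C_0(X) (x) L_0 = {ffun V -> 'rV_m}.                *)
(* tanner_bd x v = sum over edges e with endpoint v of x_e * del^L(lab v e), *)
(* i.e.  del e = v (x) del^L(Lambda_v e) + w (x) del^L(Lambda_w e).         *)
Definition tanner_bd (V E : finType) (ends : E -> V * V) (s m : nat)
    (D : 'M[F2]_(s, m)) (lab : V -> E -> 'I_s) (x : E -> F2) (v : V)
    : 'rV[F2]_m :=
  \sum_(e | (ends e).1 == v) x e *: row (lab v e) D +
  \sum_(e | (ends e).2 == v) x e *: row (lab v e) D.

Definition tanner_map (V E : finType) (ends : E -> V * V) (s m : nat)
    (D : 'M[F2]_(s, m)) (lab : V -> E -> 'I_s)
    : {ffun E -> F2^o} -> {ffun V -> 'rV[F2]_m} :=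
  fun x => [ffun v => tanner_bd ends D lab (fun e => x e) v].

Definition orbit_of (n : nat) (T : finType) (act : T -> 'I_n.+1 -> T) (x : T)
  : {set T} := [set act x h | h : 'I_n.+1].

Definition orbits_type (n : nat) (T : finType) (act : T -> 'I_n.+1 -> T) :=
  {S : {set T} | [exists x, S == orbit_of act x]}.

Section OrbitsFin.
Variables (n : nat) (T : finType) (act : T -> 'I_n.+1 -> T).
HB.instance Definition _ :=
  Finite.copy (orbits_type act) {S : {set T} | [exists x, S == orbit_of act x]}.
End OrbitsFin.

Definition orbit_rep (n : nat) (T : finType) (act : T -> 'I_n.+1 -> T)
    (q : orbits_type act) : T :=
  odflt (xchoose (existsP (valP q))) [pick x in val q].

Definition orbit_cls (n : nat) (T : finType) (act : T -> 'I_n.+1 -> T) (x : T)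
  : orbits_type act :=
  exist _ (orbit_of act x) (introT existsP (ex_intro _ x (eqxx (orbit_of act x)))).

Definition quot_ends (n : nat) (V E : finType) (ends : E -> V * V)
    (actV : V -> 'I_n.+1 -> V) (actE : E -> 'I_n.+1 -> E)
    (q : orbits_type actE) : orbits_type actV * orbits_type actV :=
  let e := orbit_rep q in
  (orbit_cls actV (ends e).1, orbit_cls actV (ends e).2).

(* descended labeling: Lambdabar_[v]([e]) = Lambda_v(e) for e incident to v *)
Definition quot_lab (n : nat) (V E : finType) (ends : E -> V * V)
    (actV : V -> 'I_n.+1 -> V) (actE : E -> 'I_n.+1 -> E) (s : nat)
    (lab : V -> E -> 'I_s) (S : orbits_type actV) (q : orbits_type actE)
    : 'I_s :=
  let e := orbit_rep q in
  if orbit_cls actV (ends e).1 == S then lab (ends e).1 e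
  else lab (ends e).2 e.

(* The cycle graph C_l (l = n.+1): vertices 'I_l, edges 'I_l, edge j joins   *)
(* j and j+1; H acts on the left by rotation h . j = h + j.  Chains are      *)
(* identified with functions, and tensor products of spaces of functions on  *)
(* finite sets with functions on the product.                               *)
(*   P2 = C_1(X) (x) C_1(C_l)           = {ffun E * 'I_l -> F2}             *)
(*   P1 = C_1(X) (x) C_0(C_l)  (+)  (C_0(X) (x) L_0) (x) C_1(C_l)           *)
(*   P0 = (C_0(X) (x) L_0) (x) C_0(C_l) = {ffun V * 'I_l -> 'rV_m}          *)
(* and T_i = P_i / R_i where R_i is the span of the balancing relations      *)
(* (x h) (x) y - x (x) (h y).                                               *)
Section BalancedProduct.
Variables (n : nat) (V E : finType) (ends : E -> V * V)
  (actV : V -> 'I_n.+1 -> V) (actE : E -> 'I_n.+1 -> E)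
  (s m : nat) (D : 'M[F2]_(s, m)) (lab : V -> E -> 'I_s).

Local Notation I := 'I_n.+1.
Definition P2 := {ffun (E * I)%type -> F2^o}.
Definition P1a := {ffun (E * I)%type -> F2^o}.
Definition P1b := {ffun (V * I)%type -> 'rV[F2]_m}.
Definition P1 := (P1a * P1b)%type.
Definition P0 := {ffun (V * I)%type -> 'rV[F2]_m}.

Definition relE (p : (E * I * I)%type) : {ffun (E * I)%type -> F2^o} :=
  let: (e, j, h) := p in
  [ffun q => ((q == (actE e h, j))%:R - (q == (e, h + j))%:R : F2)].
Definition relV (p : (V * I * I * 'rV[F2]_m)%type) : {ffun (V * I)%type -> 'rV[F2]_m} :=
  let: (v, j, h, l) := p in
  [ffun q => (q == (actV v h, j))%:R *: l - (q == (v, h + j))%:R *: l].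

Definition R2 : {vspace P2} := <<[seq relE p | p : (E * I * I)%type]>>%VS.
Definition R1 : {vspace P1} :=
  (<<[seq (relE p, 0%R : P1b) | p : (E * I * I)%type]>> +
   <<[seq (0%R : P1a, relV p) | p : (V * I * I * 'rV[F2]_m)%type]>>)%VS.
Definition R0 : {vspace P0} :=
  <<[seq relV p | p : (V * I * I * 'rV[F2]_m)%type]>>%VS.

(* differential of the total complex, induced by del (x) id + id (x) del^C;
   the edge j of C_l has boundary j + (j+1). *)
Definition d2 (x : P2) : P1 :=
  ([ffun q : (E * I)%type => x q + x (q.1, q.2 - Zp1)],
   [ffun q : (V * I)%type => tanner_bd ends D lab (fun e => x (e, q.2)) q.1]).

Definition d1 (y : P1) : P0 :=
  [ffun q : (V * I)%type => tanner_bd ends D lab (fun e => y.1 (e, q.2)) q.1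
                     + y.2 q + y.2 (q.1, q.2 - Zp1)].

(* cycles and boundaries of T_1 = P1 / R1, lifted to P1 *)
Definition Z1 : {vspace P1} := (linfun d1 @^-1: R0)%VS.
Definition B1 : {vspace P1} := (limg (linfun d2) + R1)%VS.
(* lifts of classes having a representative (u, 0) *)
Definition Z1h : {vspace P1} :=
  (Z1 :&: limg (linfun (fun u : P1a => (u, 0%R : P1b))))%VS.

Definition dim_horizontal_homology : nat := (\dim (Z1h + B1) - \dim B1)%N.

End BalancedProduct.

Definition dim_ker_quotient_tanner (n : nat) (V E : finType) (ends : E -> V * V)
    (actV : V -> 'I_n.+1 -> V) (actE : E -> 'I_n.+1 -> E)
    (s m : nat) (D : 'M[F2]_(s, m)) (lab : V -> E -> 'I_s) : nat :=
  \dim (lker (linfun (tanner_map (@quot_ends n V E ends actV actE) D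
                                 (@quot_lab n V E ends actV actE s lab)))).

(* Main.v *)
From HB Require Import structures.
Require Import Defs.
From mathcomp Require Import all_boot all_algebra.
Set Implicit Arguments. Unset Strict Implicit. Unset Printing Implicit Defensive.
Import GRing.Theory.
Local Open Scope ring_scope.

Lemma linfunP (K:fieldType)(aT rT : vectType K) (f: aT->rT) :
  (forall a x y, f (a *: x + y) = a *: f x + f y) -> linfun f =1 f.
Proof.
move=> Hf.
pose ff : {linear aT -> rT} := HB.pack f (GRing.isLinear.Build K aT rT *:%R f Hf).
exact: (lfunE ff).
Qed.
Lemma F2_2 : (2%:R : F2) = 0. Proof. apply/eqP. by []. Qed.
Lemma F2_add (x : F2) : x + x = 0. Proof. by rewrite -mulr2n -mulr_natr F2_2 mulr0. Qed.
Lemma F2_opp (x : F2) : - x = x.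
Proof. by apply/eqP; rewrite eq_sym -subr_eq0 opprK F2_add. Qed.

Lemma tb_inc (V E : finType) (ends : E -> V * V) (s m : nat) (D : 'M[F2]_(s, m))
  (lab : V -> E -> 'I_s) (x : E -> F2) (v : V) :
  (forall e, (ends e).1 != (ends e).2) ->
  tanner_bd ends D lab x v = \sum_(e in incident ends v) x e *: row (lab v e) D.
Proof.
move=> nl; rewrite /tanner_bd [RHS](bigID (fun e => (ends e).1 == v)) /=.
congr (_ + _); apply: eq_bigl => e; rewrite !inE.
  by case: ((ends e).1 == v); case: ((ends e).2 == v).
case: eqP => [<-|]; last by case: ((ends e).1 == v).
by rewrite (negbTE (nl e)).
Qed.

Lemma tb_lin_gen (V E : finType) (ends : E -> V * V) (s m : nat) (D : 'M[F2]_(s, m))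
  (lab : V -> E -> 'I_s) a (x y : E -> F2) (v : V) :
  tanner_bd ends D lab (fun e => a * x e + y e) v =
  a *: tanner_bd ends D lab x v + tanner_bd ends D lab y v.
Proof.
rewrite /tanner_bd scalerDr !scaler_sumr addrACA -!big_split /=.
by congr (_ + _); apply: eq_bigr => e _; rewrite scalerDl scalerA.
Qed.

Lemma tmap_lin (V E : finType) (ends : E -> V * V) (s m : nat) (D : 'M[F2]_(s, m))
  (lab : V -> E -> 'I_s) :
  linfun (tanner_map ends D lab) =1 tanner_map ends D lab.
Proof.
apply: linfunP => a x y; apply/ffunP => v; rewrite !ffunE -tb_lin_gen.
by rewrite /tanner_bd; congr (_ + _); apply: eq_bigr => e _; rewrite !ffunE.
Qed.

Section Orbits.
Variables (n : nat) (T : finType) (act : T -> 'I_n.+1 -> T).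
Hypothesis (Ha : is_right_action act).

Lemma oact0 x : act x 0 = x. Proof. by case: Ha. Qed.
Lemma oactA x g h : act (act x g) h = act x (g + h). Proof. by case: Ha. Qed.

Lemma mem_orbit x h : act x h \in orbit_of act x.
Proof. by apply/imsetP; exists h. Qed.

Lemma orbit_mem x y : y \in orbit_of act x -> exists h, y = act x h.
Proof. by case/imsetP => h _ ->; exists h. Qed.

Lemma orbit_act x h : orbit_of act (act x h) = orbit_of act x.
Proof.
apply/setP => y; apply/imsetP/imsetP => [[g _ ->]|[g _ ->]].
  by exists (h + g) => //; rewrite oactA.
by exists (- h + g) => //; rewrite oactA addrA subrr add0r.
Qed.

Lemma cls_eq x y : orbit_cls act x = orbit_cls act y <-> exists h, x = act y h.
Proof.
split => [H|[h ->]]; last by apply: val_inj; rewrite /= orbit_act.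
have : x \in orbit_of act y.
  by have := congr1 val H; rewrite /= => <-; rewrite -{1}(oact0 x) mem_orbit.
exact: orbit_mem.
Qed.

Lemma rep_mem (q : orbits_type act) : orbit_rep q \in val q.
Proof.
rewrite /orbit_rep; case: pickP => [x //|H]; exfalso.
have := xchooseP (existsP (valP q)); move: (xchoose _) => y /eqP Hq.
by move: (H y); rewrite /= Hq -{1}(oact0 y) mem_orbit.
Qed.

Lemma cls_rep (q : orbits_type act) : orbit_cls act (orbit_rep q) = q.
Proof.
have [y /eqP Hy] := existsP (valP q).
have := rep_mem q; rewrite Hy => /orbit_mem [h Hh].
by apply: val_inj; rewrite /= Hh orbit_act Hy.
Qed.

Lemma rep_cls x : exists h, orbit_rep (orbit_cls act x) = act x h.
Proof. exact: orbit_mem (rep_mem (orbit_cls act x)). Qed.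

End Orbits.

Section Main.
Variables (n : nat) (V E : finType) (ends : E -> V * V)
    (actV : V -> 'I_n.+1 -> V) (actE : E -> 'I_n.+1 -> E)
    (s m : nat) (D : 'M[F2]_(s, m)) (lab : V -> E -> 'I_s).
Hypotheses (Hodd : odd n.+1) (HaV : is_right_action actV) (HaE : is_right_action actE)
  (HfV : free_action actV) (HfE : free_action actE) (Hg : graph_action ends actV actE)
  (Hno : no_orbit_edge ends actV) (Hinv : H_invariant_labeling ends actV actE lab).

Local Notation I := 'I_n.+1.

Lemma actV0 x : actV x 0 = x. Proof. by case: HaV. Qed.
Lemma actVA x g h : actV (actV x g) h = actV x (g + h). Proof. by case: HaV. Qed.
Lemma actE0 x : actE x 0 = x. Proof. by case: HaE. Qed.
Lemma actEA x g h : actE (actE x g) h = actE x (g + h). Proof. by case: HaE. Qed.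
Lemma actVK h : cancel (actV^~ h) (actV^~ (-h)).
Proof. by move=> x; rewrite actVA subrr actV0. Qed.
Lemma actVKV h : cancel (actV^~ (-h)) (actV^~ h).
Proof. by move=> x; rewrite actVA addNr actV0. Qed.
Lemma actEK h : cancel (actE^~ h) (actE^~ (-h)).
Proof. by move=> x; rewrite actEA subrr actE0. Qed.
Lemma actEKV h : cancel (actE^~ (-h)) (actE^~ h).
Proof. by move=> x; rewrite actEA addNr actE0. Qed.
Lemma actV_inj h : injective (actV^~ h). Proof. exact: can_inj (actVK h). Qed.
Lemma actE_inj h : injective (actE^~ h). Proof. exact: can_inj (actEK h). Qed.

Lemma noloop e : (ends e).1 != (ends e).2.
Proof. by apply/eqP => H; have := @Hno e 0; rewrite actV0 H. Qed.
Lemma Hno' e h : (ends e).1 <> actV (ends e).2 h.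
Proof. by move=> H; have := @Hno e (-h); rewrite H actVK. Qed.

Lemma inc_act e v h :
  (actE e h \in incident ends (actV v h)) = (e \in incident ends v).
Proof.
rewrite !inE; have eqh (a : V) : (actV a h == actV v h) = (a == v) by exact: (inj_eq (@actV_inj h)).
by case: (Hg e h) => ->; rewrite /= !eqh // orbC.
Qed.

Local Notation tb x v := (tanner_bd ends D lab x v).

Lemma tbE x v : tb x v = \sum_(e in incident ends v) x e *: row (lab v e) D.
Proof. exact: tb_inc noloop. Qed.

Lemma tb_act x h v : tb (fun e => x (actE e h)) v = tb x (actV v h).
Proof.
rewrite !tbE [RHS](reindex (actE^~ h)) /=; last first.
  by exists (actE^~ (-h)) => e _; [apply: actEK | apply: actEKV].
apply: eq_big => e; first by rewrite inc_act.
by move=> He; rewrite Hinv.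
Qed.

Lemma tb_sum (J : Type) (r : seq J) (P : pred J) (c : J -> F2) (f : J -> E -> F2) v :
  tb (fun e => \sum_(i <- r | P i) c i * f i e) v =
  \sum_(i <- r | P i) c i *: tb (f i) v.
Proof.
rewrite tbE; under eq_bigr do rewrite scaler_suml.
rewrite exchange_big /=; apply: eq_bigr => i _.
by rewrite tbE scaler_sumr; apply: eq_bigr => e _; rewrite scalerA.
Qed.

Lemma tb_lin a x y v : tb (fun e => a * x e + y e) v = a *: tb x v + tb y v.
Proof.
rewrite !tbE scaler_sumr -big_split /=; apply: eq_bigr => e _.
by rewrite scalerDl scalerA.
Qed.

Lemma tb0 v : tb (fun _ => 0) v = 0.
Proof. by rewrite tbE big1 // => e _; rewrite scale0r. Qed.


Lemma tb_ext x y v : x =1 y -> tb x v = tb y v.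
Proof. by move=> Hxy; rewrite !tbE; apply: eq_bigr => e _; rewrite Hxy. Qed.

Lemma tb_sum1 (J : Type) (r : seq J) (P : pred J) (f : J -> E -> F2) v :
  tb (fun e => \sum_(i <- r | P i) f i e) v = \sum_(i <- r | P i) tb (f i) v.
Proof.
rewrite -(tb_ext (x := fun e => \sum_(i <- r | P i) 1 * f i e)).
  by rewrite tb_sum; apply: eq_bigr => i _; rewrite scale1r.
by move=> e; apply: eq_bigr => i _; rewrite mul1r.
Qed.

Lemma addI (c : I) : injective (fun k : I => k + c).
Proof. exact: can_inj (addrK c). Qed.

Definition piE (u : {ffun (E * I)%type -> F2^o}) : {ffun E -> F2^o} :=
  [ffun e => \sum_k u (actE e (-k), k)].
Definition piV (f : {ffun (V * I)%type -> 'rV[F2]_m}) : {ffun V -> 'rV[F2]_m} :=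
  [ffun v => \sum_k f (actV v (-k), k)].
Definition NE (x : {ffun E -> F2^o}) : {ffun E -> F2^o} :=
  [ffun e => \sum_h x (actE e h)].
Definition SE (x : {ffun E -> F2^o}) : {ffun E -> F2^o} :=
  [ffun e => x (actE e (- Zp1))].
Definition emb0 (x : {ffun E -> F2^o}) : {ffun (E * I)%type -> F2^o} :=
  [ffun q => (q.2 == 0)%:R * x q.1].

Lemma actE_eq e0 a j : (actE e0 (-j) == a) = (e0 == actE a j).
Proof. by apply/eqP/eqP => [<-|->]; [rewrite actEKV | rewrite actEK]. Qed.
Lemma actV_eq e0 a j : (actV e0 (-j) == a) = (e0 == actV a j).
Proof. by apply/eqP/eqP => [<-|->]; [rewrite actVKV | rewrite actVK]. Qed.

Lemma sum_indE (a : E) (j : I) e0 :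
  \sum_k (((actE e0 (-k), k) == (a, j))%:R : F2) = (e0 == actE a j)%:R.
Proof.
rewrite (bigD1 j) //= big1 => [|k Hk]; last by rewrite xpair_eqE (negbTE Hk) andbF.
by rewrite xpair_eqE eqxx andbT addr0 actE_eq.
Qed.
Lemma sum_indV (a : V) (j : I) e0 (l : 'rV[F2]_m) :
  \sum_k (((actV e0 (-k), k) == (a, j))%:R *: l) = (e0 == actV a j)%:R *: l.
Proof.
rewrite (bigD1 j) //= big1 => [|k Hk]; last by rewrite xpair_eqE (negbTE Hk) andbF scale0r.
by rewrite xpair_eqE eqxx andbT addr0 actV_eq.
Qed.

Lemma piE_rel p : piE (relE actE p) = 0.
Proof.
case: p => [[e j] h]; apply/ffunP => e0; rewrite !ffunE.
under eq_bigr do rewrite ffunE.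
by rewrite sumrB !sum_indE actEA subrr.
Qed.

Lemma piV_rel p : piV (relV actV p) = 0.
Proof.
case: p => [[[v j] h] l]; apply/ffunP => e0; rewrite !ffunE.
under eq_bigr do rewrite ffunE.
by rewrite sumrB !sum_indV actVA subrr.
Qed.

Lemma piE_d2 (y : {ffun (E * I)%type -> F2^o}) :
  piE [ffun q : (E * I)%type => y q + y (q.1, q.2 - Zp1)] = piE y + SE (piE y).
Proof.
apply/ffunP => e; rewrite !ffunE.
under eq_bigr do rewrite ffunE /=.
rewrite big_split /=; congr (_ + _).
rewrite (reindex_inj (@addI Zp1)) /=; apply: eq_bigr => k _.
by rewrite addrK actEA opprD addrC.
Qed.

Lemma NE_SE x : NE (SE x) = NE x.
Proof.
apply/ffunP => e; rewrite !ffunE [RHS](reindex_inj (@addI (- Zp1))) /=.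
by apply: eq_bigr => h _; rewrite ffunE actEA.
Qed.

Lemma F2f_add (T : finType) (x : {ffun T -> F2^o}) : x + x = 0.
Proof. by apply/ffunP => t; rewrite !ffunE F2_add. Qed.


Lemma emb0_decomp (u : {ffun (E * I)%type -> F2^o}) :
  u - emb0 (piE u) = \sum_(p : (E * I)%type) (- u p) *: relE actE (p.1, 0, p.2).
Proof.
apply/ffunP => [[e0 j]]; rewrite sum_ffunE !ffunE /=.
have S1 : \sum_(p : (E * I)%type) u p * ((e0, j) == (p.1, p.2 + 0))%:R = u (e0, j).
  rewrite (bigD1 (e0, j)) //= addr0 eqxx mulr1 big1 ?addr0 // => [[a k]] /= Hp.
  by rewrite addr0 eq_sym (negbTE Hp) mulr0.
have S2 : \sum_(p : (E * I)%type) u p * ((e0, j) == (actE p.1 p.2, 0))%:R =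
   (j == 0)%:R * \sum_(k < n.+1) u (actE e0 (- k), k).
  transitivity (\sum_(a : E) \sum_(k : I) u (a, k) * ((e0, j) == (actE a k, 0))%:R).
    by rewrite pair_bigA; apply: eq_bigr => [[a k]].
  rewrite exchange_big mulr_sumr; apply: eq_bigr => k _.
  rewrite (bigD1 (actE e0 (-k))) //= big1 ?addr0 => [|a Ha]; last first.
    by rewrite xpair_eqE -actE_eq eq_sym (negbTE Ha) mulr0.
  by rewrite xpair_eqE actEKV eqxx /= mulrC.
rewrite -S1 -S2 -sumrB; apply: eq_bigr => p _; rewrite !ffunE.
by rewrite scalerBr !scaleNr opprK addrC.
Qed.


Lemma piV_d1 (u : {ffun (E * I)%type -> F2^o}) :
  piV (d1 ends D lab (u, 0)) = [ffun v => tb (fun e => piE u e) v].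
Proof.
apply/ffunP => v; rewrite !ffunE.
under eq_bigr do rewrite !ffunE /= addr0 addr0 -tb_act.
rewrite -tb_sum1; apply: tb_ext => e; rewrite ffunE.
by apply: eq_bigr => k _.
Qed.


Lemma perm6 (K : pzRingType) (M : lmodType K) a (A B C A' B' C' : M) :
  a *: A + A' + (a *: B + B') + (a *: C + C') = a *: (A + B + C) + (A' + B' + C').
Proof.
by rewrite !scalerDr (addrACA (a *: A) A' (a *: B) B') (addrACA (a *: A + a *: B) (A' + B') (a *: C) C').
Qed.

Lemma d1_lin a (y z : P1 n V E m) :
  d1 ends D lab (a *: y + z) = a *: d1 ends D lab y + d1 ends D lab z.
Proof.
apply/ffunP => q; rewrite /d1 !ffunE /=.
rewrite -(tb_ext (x := fun e => a * y.1 (e, q.2) + z.1 (e, q.2))); last first.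
  by move=> e; rewrite !ffunE.
rewrite tb_lin ?ffunE; apply: perm6.
Qed.

Lemma d2_lin a (y z : P2 n E) :
  d2 ends D lab (a *: y + z) = a *: d2 ends D lab y + d2 ends D lab z.
Proof.
rewrite /d2 /=; congr (_, _); apply/ffunP => q; rewrite !ffunE.
  by rewrite scalerDr addrACA.
rewrite -(tb_ext (x := fun e => a * y (e, q.2) + z (e, q.2))); last first.
  by move=> e; rewrite !ffunE.
by rewrite tb_lin.
Qed.

Definition Theta (y : P1 n V E m) : {ffun E -> F2^o} := NE (piE y.1).

Lemma Theta_lin a (y z : P1 n V E m) : Theta (a *: y + z) = a *: Theta y + Theta z.
Proof.
apply/ffunP => e; rewrite !ffunE /= scaler_sumr -big_split /=.
apply: eq_bigr => h _; rewrite !ffunE scaler_sumr -big_split /=.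
by apply: eq_bigr => k _; rewrite !ffunE.
Qed.

Lemma piV_lin a (y z : P0 n V m) : piV (a *: y + z) = a *: piV y + piV z.
Proof.
apply/ffunP => e; rewrite !ffunE /= scaler_sumr -big_split /=.
by apply: eq_bigr => h _; rewrite !ffunE.
Qed.

Definition embp (u : P1a n E) : P1 n V E m := (u, 0).
Lemma embp_lin a (y z : P1a n E) : embp (a *: y + z) = a *: embp y + embp z.
Proof. by apply: injective_projections => /=; rewrite ?scaler0 ?addr0. Qed.


Lemma gmul_inj : injective (fun i : 'I_n.+1 => (- Zp1 : 'I_n.+1) *+ i).
Proof.
move=> i j /= /eqP; rewrite !mulNrn eqr_opp !Zp_mulrn => /eqP /(congr1 val) /=.
by rewrite !modnMml !mul1n !modn_small // => H; apply: val_inj.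
Qed.

Lemma NE_gen (z : {ffun E -> F2^o}) e :
  NE z e = \sum_(i < n.+1) z (actE e ((- Zp1) *+ i)).
Proof. by rewrite ffunE (reindex_inj gmul_inj). Qed.

Definition wz (z : {ffun E -> F2^o}) : {ffun E -> F2^o} :=
  [ffun e => \sum_(i < n.+1) (odd i)%:R * z (actE e ((- Zp1) *+ i))].

Lemma wz_SE z : NE z = 0 -> wz z + SE (wz z) = z.
Proof.
move=> Nz; apply/ffunP => e; rewrite !ffunE.
have T : \sum_(i < n.+1) z (actE e ((- Zp1) *+ i)) = 0.
  by rewrite -NE_gen Nz ffunE.
rewrite big_ord_recl /= mulr0n actE0 in T.
under [X in _ + X = _]eq_bigr do rewrite actEA -mulrS.
rewrite big_ord_recl big_ord_recr /= mul0r add0r.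
have -> : odd n = false by move: Hodd => /= /negPf.
rewrite mul0r addr0 -big_split /=.
rewrite (eq_bigr (fun i : 'I_n => z (actE e ((- Zp1) *+ i.+1)))); last first.
  move=> i _; rewrite /bump /= add1n -mulrDl.
  by case: (odd i) => /=; rewrite ?add0r ?addr0 mul1r.
by move/eqP: T; rewrite addrC addr_eq0 F2_opp => /eqP.
Qed.


Lemma lf_d1 : linfun (@d1 n V E ends s m D lab) =1 @d1 n V E ends s m D lab.
Proof. exact: linfunP d1_lin. Qed.
Lemma lf_d2 : linfun (@d2 n V E ends s m D lab) =1 @d2 n V E ends s m D lab.
Proof. exact: linfunP d2_lin. Qed.
Lemma lf_Theta : linfun Theta =1 Theta.
Proof. exact: linfunP Theta_lin. Qed.
Lemma lf_piV : linfun piV =1 piV.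
Proof. exact: linfunP piV_lin. Qed.
Lemma lf_embp : linfun (fun u : P1a n E => (u, 0 : P1b n V m)) =1 (fun u => (u, 0)).
Proof. exact: linfunP embp_lin. Qed.

Lemma tbZ c x v : tb (fun e => c * x e) v = c *: tb x v.
Proof.
rewrite -(tb_ext (x := fun e => c * x e + (fun _ => 0) e)); last by move=> e; rewrite addr0.
by rewrite tb_lin tb0 addr0.
Qed.

Lemma piE_emb0 x : piE (emb0 x) = x.
Proof.
apply/ffunP => e; rewrite ffunE (bigD1 0) //= big1 => [|k Hk]; last first.
  by rewrite ffunE /= (negbTE Hk) mul0r.
by rewrite ffunE /= mul1r oppr0 actE0 addr0.
Qed.

Lemma NE_add a b : NE (a + b) = NE a + NE b.
Proof. by apply/ffunP => e; rewrite !ffunE -big_split; apply: eq_bigr => h _; rewrite ffunE. Qed.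

Lemma R0_piV f : f \in R0 actV m -> piV f = 0.
Proof.
move=> Hf; have : (R0 actV m <= lker (linfun piV))%VS.
  by apply/span_subvP => x /mapP [p _ ->]; rewrite memv_ker lf_piV piV_rel.
by move/subvP/(_ _ Hf); rewrite memv_ker lf_piV => /eqP.
Qed.

Lemma R1_Theta y : y \in R1 actV actE m -> Theta y = 0.
Proof.
move=> Hy; have : (R1 actV actE m <= lker (linfun Theta))%VS.
  rewrite subv_add; apply/andP; split; apply/span_subvP => x /mapP [p _ ->];
    rewrite memv_ker lf_Theta /Theta /=.
    by rewrite piE_rel; apply/eqP/ffunP => e; rewrite !ffunE big1 // => h _; rewrite ffunE.
  suff -> : piE 0 = 0 by apply/eqP/ffunP => e; rewrite !ffunE big1 // => h _; rewrite ffunE.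
  by apply/ffunP => e; rewrite !ffunE big1 // => h _; rewrite ffunE.
by move/subvP/(_ _ Hy); rewrite memv_ker lf_Theta => /eqP.
Qed.


Lemma Z_elim y : y \in Z1h ends actV D lab ->
  exists u, y = (u, 0) /\ (forall v, tb (fun e => piE u e) v = 0).
Proof.
rewrite memv_cap => /andP [H1 /memv_imgP [u _ Hy]].
rewrite lf_embp in Hy; subst y; exists u; split => // v.
rewrite -memv_preim lf_d1 in H1.
have := R0_piV H1; rewrite piV_d1 => /ffunP /(_ v); by rewrite !ffunE.
Qed.

Lemma Z_intro (x : {ffun E -> F2^o}) : (forall v, tb (fun e => x e) v = 0) ->
  (emb0 x, 0) \in Z1h ends actV D lab.
Proof.
move=> Hx; rewrite memv_cap; apply/andP; split; last first.
  by rewrite -(lf_embp (emb0 x)); apply: memv_img; rewrite memvf.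
rewrite -memv_preim lf_d1.
suff -> : d1 ends D lab (emb0 x, 0) = 0 by rewrite mem0v.
apply/ffunP => q; rewrite !ffunE /= !addr0.
rewrite -(tb_ext (x := fun e => (q.2 == 0)%:R * x e)); last by move=> e; rewrite ffunE.
by rewrite tbZ Hx scaler0.
Qed.

Lemma Theta_d2 y : Theta (d2 ends D lab y) = 0.
Proof. by rewrite /Theta /= piE_d2 NE_add NE_SE F2f_add. Qed.

Lemma B_Theta y : y \in B1 ends actV actE D lab -> Theta y = 0.
Proof.
move/memv_addP => [a /memv_imgP [y' _ ->] [r Hr ->]].
by rewrite -lf_Theta linearD /= !lf_Theta lf_d2 Theta_d2 R1_Theta // add0r.
Qed.


Lemma decomp_span (a : {ffun (E * I)%type -> F2^o}) :
  a - emb0 (piE a) \in <<[seq relE actE p | p : (E * I * I)%type]>>%VS.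
Proof.
rewrite emb0_decomp; apply: memv_suml => p _; apply: memvZ; apply: memv_span.
by apply/mapP; exists (p.1, 0, p.2); rewrite ?mem_enum.
Qed.

Lemma span_pair (a : P1a n E) :
  a \in <<[seq relE actE p | p : (E * I * I)%type]>>%VS ->
  ((a, 0) : P1 n V E m) \in
     <<[seq (relE actE p, 0%R : P1b n V m) | p : (E * I * I)%type]>>%VS.
Proof.
move=> Ha; have := memv_img (linfun (fun u : P1a n E => (u, 0 : P1b n V m))) Ha.
rewrite lf_embp limg_span => H.
suff : (<<map (linfun (fun u : P1a n E => (u, 0%R : P1b n V m)))
          [seq relE actE p | p : (E * I * I)%type]>> <=
       <<[seq (relE actE p, 0%R : P1b n V m) | p : (E * I * I)%type]>>)%VS.
  by move/subvP; apply.
apply/span_subvP => x /mapP [r /mapP [p Hp ->] ->]; rewrite lf_embp.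
by apply: memv_span; apply/mapP; exists p.
Qed.

Lemma ZTheta_B y : y \in Z1h ends actV D lab -> Theta y = 0 ->
  y \in B1 ends actV actE D lab.
Proof.
move=> /Z_elim [u [-> Hu]] Nz; rewrite /Theta /= in Nz.
set z := piE u in Hu Nz; set w := wz z.
have Hw v : tb (fun e => w e) v = 0.
  rewrite -(tb_ext (x := fun e => \sum_(i < n.+1) (odd i)%:R * z (actE e ((- Zp1) *+ i)))); last first.
    by move=> e; rewrite ffunE.
  rewrite tb_sum big1 // => i _.
  rewrite tb_act; have := Hu (actV v ((- Zp1) *+ i)); rewrite /z => ->; by rewrite scaler0.
set y' : P2 n E := emb0 w.
have D2 : d2 ends D lab y' = ((d2 ends D lab y').1, 0).
  apply: injective_projections => //=; apply/ffunP => q; rewrite !ffunE.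
  rewrite -(tb_ext (x := fun e => (q.2 == 0)%:R * w e)); last by move=> e; rewrite /y' /emb0 [RHS]ffunE.
  by rewrite tbZ Hw scaler0.
have P : piE (d2 ends D lab y').1 = z by rewrite /= piE_d2 piE_emb0 wz_SE.
have -> : ((u, 0) : P1 n V E m) = d2 ends D lab y' + (u - (d2 ends D lab y').1, 0).
  by rewrite D2; apply: injective_projections => /=; rewrite ?addr0 // addrC subrK.
apply: memv_add; first by rewrite -lf_d2; apply: memv_img; rewrite memvf.
rewrite -[X in X \in _]addr0; apply: memv_add; last exact: mem0v.
apply: span_pair.
have -> : u - (d2 ends D lab y').1 =
   (u - emb0 (piE u)) - ((d2 ends D lab y').1 - emb0 (piE (d2 ends D lab y').1)).
  by rewrite P opprB addrA subrK.
by apply: memvB; apply: decomp_span.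
Qed.


Definition Kp (x : {ffun E -> F2^o}) :=
  (forall v, tb (fun e => x e) v = 0) /\ (forall e h, x (actE e h) = x e).

Lemma NE_inv z e h : NE z (actE e h) = NE z e.
Proof.
rewrite !ffunE [RHS](reindex_inj (addrI h)) /=.
by apply: eq_bigr => g _; rewrite actEA.
Qed.

Lemma img_Kp x : x \in (linfun Theta @: Z1h ends actV D lab)%VS -> Kp x.
Proof.
move/memv_imgP => [y /Z_elim [u [-> Hu]] ->]; rewrite lf_Theta /Theta /=.
split => [v|e h]; last exact: NE_inv.
rewrite -(tb_ext (x := fun e => \sum_h piE u (actE e h))); last by move=> e; rewrite ffunE.
by rewrite tb_sum1 big1 // => h _; rewrite tb_act Hu.
Qed.

Lemma odd_mul (a : F2) : a *+ n.+1 = a.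
Proof.
rewrite -[n.+1]odd_double_half Hodd mulrnDr mulr1n -mul2n mulrnA.
by rewrite mulr2n F2_add mul0rn addr0.
Qed.

Lemma Kp_img x : Kp x -> x \in (linfun Theta @: Z1h ends actV D lab)%VS.
Proof.
move=> [Ht Hi]; have -> : x = linfun Theta (emb0 x, 0).
  rewrite lf_Theta /Theta /= piE_emb0; apply/ffunP => e; rewrite ffunE.
  under eq_bigr do rewrite Hi.
  by rewrite sumr_const card_ord odd_mul.
by apply: memv_img; apply: Z_intro.
Qed.


Local Notation qends := (@quot_ends n V E ends actV actE).
Local Notation qlab := (@quot_lab n V E ends actV actE s lab).

Lemma cls_neq_ends e : orbit_cls actV (ends e).1 != orbit_cls actV (ends e).2.
Proof. by apply/eqP => /(cls_eq HaV) [h H]; apply: (Hno' H). Qed.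

Lemma qnoloop q : (qends q).1 != (qends q).2.
Proof. exact: cls_neq_ends. Qed.

Lemma inc_one r w : r \in incident ends w ->
  orbit_cls actV (ends r).1 == orbit_cls actV w -> (ends r).1 = w.
Proof.
rewrite inE => /orP [/eqP //|/eqP H2] /eqP H1; exfalso.
by move: (cls_neq_ends r); rewrite H1 H2 eqxx.
Qed.

Lemma inc_two r w : r \in incident ends w ->
  orbit_cls actV (ends r).1 != orbit_cls actV w -> (ends r).2 = w.
Proof. by rewrite inE => /orP [/eqP H1|/eqP //]; rewrite H1 eqxx. Qed.

Lemma qlab_cls v e : e \in incident ends v ->
  qlab (orbit_cls actV v) (orbit_cls actE e) = lab v e.
Proof.
move=> He; rewrite /quot_lab; have [h Hh] := rep_cls HaE e; rewrite Hh.
have Hr : actE e h \in incident ends (actV v h) by rewrite inc_act.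
have Hc : orbit_cls actV (actV v h) = orbit_cls actV v by apply/(cls_eq HaV); exists h.
case: ifP => H.
  by rewrite (inc_one Hr) ?Hc ?H // Hinv.
by rewrite (inc_two Hr) ?Hc ?H // Hinv.
Qed.

Lemma inc_shift e v h : e \in incident ends v -> actE e h \in incident ends v -> h = 0.
Proof.
move=> H1; rewrite -{1}(actVKV h v) inc_act => H2.
case: (eqVneq (actV v (-h)) v) => [Hw|Hw].
  by apply/eqP; rewrite -oppr_eq0; apply/eqP; apply: HfV Hw.
exfalso; move: H1 H2; rewrite !inE => /orP[]/eqP H1 /orP[]/eqP H2;
  first [by move: Hw; rewrite -H2 H1 eqxx | by apply: (@Hno e (-h)); rewrite H1 H2
        | by apply: (@Hno' e (-h)); rewrite H1 H2].
Qed.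

Lemma cls_inj v : {in incident ends v &, injective (orbit_cls actE)}.
Proof.
move=> e e' He He' /(cls_eq HaE) [h Hh]; subst e.
by rewrite (inc_shift He' He) actE0.
Qed.

Lemma qinc v : incident qends (orbit_cls actV v) = orbit_cls actE @: incident ends v.
Proof.
apply/setP => q; rewrite inE /quot_ends /=; apply/idP/imsetP.
  set r := orbit_rep q.
  have key w : orbit_cls actV w = orbit_cls actV v -> r \in incident ends w ->
      exists2 e, e \in incident ends v & q = orbit_cls actE e.
    move=> /(cls_eq HaV) [h ->] Hr; exists (actE r (-h)).
      by rewrite -(inc_act (actE r (-h)) v h) actEKV.
    rewrite -(cls_rep HaE q) -/r; apply/(cls_eq HaE); exists h; by rewrite actEKV.
  case/orP => /eqP H; apply: key H _; by rewrite inE eqxx ?orbT.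
case=> e He ->; have [h Hh] := rep_cls HaE e; rewrite Hh.
have Hr : actE e h \in incident ends (actV v h) by rewrite inc_act.
have Hc : orbit_cls actV (actV v h) = orbit_cls actV v by apply/(cls_eq HaV); exists h.
by move: Hr; rewrite inE => /orP [] /eqP ->; rewrite Hc eqxx ?orbT.
Qed.

Lemma L8 (xb : {ffun orbits_type actE -> F2^o}) v :
  tanner_map qends D qlab xb (orbit_cls actV v) = tb (fun e => xb (orbit_cls actE e)) v.
Proof.
rewrite ffunE tb_inc; last exact: qnoloop.
rewrite qinc big_imset /=; last exact: cls_inj.
by rewrite tbE; apply: eq_bigr => e He; rewrite qlab_cls.
Qed.


Definition Lift (xb : {ffun orbits_type actE -> F2^o}) : {ffun E -> F2^o} :=
  [ffun e => xb (orbit_cls actE e)].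

Lemma lf_Lift : linfun Lift =1 Lift.
Proof. by apply: linfunP => a x y; apply/ffunP => e; rewrite !ffunE. Qed.

Lemma Lift_ker0 : lker (linfun Lift) == 0%VS.
Proof.
apply/lker0P => a b; rewrite !lf_Lift => H; apply/ffunP => q.
rewrite -(cls_rep HaE q); move/ffunP: H => /(_ (orbit_rep q)).
by rewrite !ffunE.
Qed.

Local Notation Tq := (tanner_map qends D qlab).

Lemma img_eq : (linfun Lift @: lker (linfun Tq) = linfun Theta @: Z1h ends actV D lab)%VS.
Proof.
apply/eqP; rewrite eqEsubv; apply/andP; split; apply/subvP => x.
  move/memv_imgP => [xb Hxb ->]; rewrite lf_Lift; apply: Kp_img; split.
    move=> v; rewrite memv_ker tmap_lin in Hxb.
    move/eqP/ffunP: Hxb => /(_ (orbit_cls actV v)); rewrite L8 ffunE => <-.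
    by apply: tb_ext => e; rewrite ffunE.
  move=> e h; rewrite !ffunE; congr (xb _); apply/(cls_eq HaE); by exists h.
move/img_Kp => [Ht Hi]; pose xb : {ffun orbits_type actE -> F2^o} := [ffun q => x (orbit_rep q)].
have Hx : Lift xb = x.
  by apply/ffunP => e; rewrite !ffunE; have [h ->] := rep_cls HaE e; exact: Hi.
rewrite -Hx -lf_Lift; apply: memv_img; rewrite memv_ker tmap_lin; apply/eqP/ffunP => S.
rewrite -(cls_rep HaV S) L8 ffunE -[RHS](Ht (orbit_rep S)).
by apply: tb_ext => e; rewrite ffunE; have [h ->] := rep_cls HaE e; exact: Hi.
Qed.

Lemma main_sec :
  dim_horizontal_homology ends actV actE D lab =
  dim_ker_quotient_tanner ends actV actE D lab.
Proof.
rewrite /dim_horizontal_homology /dim_ker_quotient_tanner.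
set Z := Z1h ends actV D lab; set B := B1 ends actV actE D lab.
have H1 := dimv_sum_cap Z B.
have H2 := limg_ker_dim (linfun Theta) Z.
have E1 : (Z :&: lker (linfun Theta) = Z :&: B)%VS.
  apply/eqP; rewrite eqEsubv; apply/andP; split; apply/subvP => y /memv_capP [Hz Hy];
    apply/memv_capP; split => //.
    by rewrite memv_ker lf_Theta in Hy; apply: ZTheta_B => //; apply/eqP.
  by rewrite memv_ker lf_Theta; apply/eqP; apply: B_Theta.
have H3 := limg_ker_dim (linfun Lift) (lker (linfun Tq)).
rewrite (eqP Lift_ker0) capv0 dimv0 add0n img_eq in H3.
rewrite E1 in H2; rewrite -H3; move: H1 H2.
move: (\dim (Z + B)) (\dim (Z :&: B)) (\dim Z) (\dim B) (\dim (linfun Theta @: Z)) => a c z b t.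
move=> H1 H2; rewrite -H2 addnC in H1.
have Ha : a = t + b by apply: (@addnI c); rewrite H1 addnA.
by rewrite Ha addnK.
Qed.

End Main.

Theorem mainTheorem11 (n : nat) (V E : finType) (ends : E -> V * V)
    (actV : V -> 'I_n.+1 -> V) (actE : E -> 'I_n.+1 -> E)
    (s m : nat) (D : 'M[F2]_(s, m)) (lab : V -> E -> 'I_s) :
  odd n.+1 ->
  s_regular ends s ->
  is_right_action actV -> is_right_action actE ->
  free_action actV -> free_action actE ->
  graph_action ends actV actE ->
  no_orbit_edge ends actV ->
  is_labeling ends lab ->
  H_invariant_labeling ends actV actE lab ->
  dim_horizontal_homology ends actV actE D lab =
  dim_ker_quotient_tanner ends actV actE D lab.
Proof.
move=> Hodd _ HaV HaE HfV HfE Hg Hno _ Hinv.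
exact: main_sec.
Qed.
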